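(* Let $U_1,U_2$ be unitaries on $n_1\ge1$ and $n_2\ge1$ qubits. Then: (1) for $0<p<2$, $0<q<\infty$: $\|\hat M^{U_1}\otimes\hat M^{U_2}\|_{p,q}\ge\|\hat M^{U_1\otimes U_2}\|_{p,q}$, with equality iff $U_1$ and $U_2$ are both Clifford; (2) for $0<p<2$: $\|\hat M^{U_1}\otimes\hat M^{U_2}\|_{p,\infty}=\|\hat M^{U_1\otimes U_2}\|_{p,\infty}$; (3) for $p>2$, $0<q\le\infty$: $\|\hat M^{U_1}\otimes\hat M^{U_2}\|_{p,q}\le\|\hat M^{U_1\otimes U_2}\|_{p,q}$, and for $0<q<\infty$ equality holds iff $U_1$ and $U_2$ are both Clifford; (4) for $p=2$, $0<q\le\infty$: $\|\hat M^{U_1}\otimes\hat M^{U_2}\|_{2,q}=\|\hat M^{U_1\otimes U_2}\|_{2,q}=1$.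
   Context: Pauli notation $P_{\vec z}=P_{z_1}\otimes\cdots\otimes P_{z_n}$, $P_0=\mathbb I,P_1=X,P_2=Y,P_3=Z$; $\vec0$ the all-zero string. For a unitary $U$ on $n$ qubits, $M^U_{\vec z\vec x}=2^{-n}\mathrm{Tr}(P_{\vec z}UP_{\vec x}U^\dagger)$ and $\hat M^U$ is the $(4^n-1)\times(4^n-1)$ submatrix with rows and columns indexed by strings $\ne\vec0$. $\otimes$ on matrices is the Kronecker product. Group norm: $\|M\|_{p,q}=(\frac1{N_1}\sum_i\|M_i\|_p^q)^{1/q}$ for an $N_1\times N_2$ matrix with rows $M_i$ ($\max_i\|M_i\|_p$ if $q=\infty$). Clifford unitary: $UP_{\vec x}U^\dagger$ is a Pauli operator up to phase for all $\vec x$. *)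

(* Defs.v *)
From HB Require Import structures.
From mathcomp Require Import all_boot all_order all_algebra.
From mathcomp Require Import reals exp.
From mathcomp Require Import complex.

Set Implicit Arguments.
Unset Strict Implicit.
Unset Printing Implicit Defensive.

Import Order.TTheory GRing.Theory Num.Theory.
Local Open Scope ring_scope.

Section Quantum.
Variable R : realType.
Local Notation C := (R[i]).

(* computational basis states of n qubits, and Pauli strings (0=I,1=X,2=Y,3=Z) *)
Definition basis (n : nat) := {ffun 'I_n -> 'I_2}.
Definition pstr (n : nat) := {ffun 'I_n -> 'I_4}.
Definition pstr0 (n : nat) : pstr n := [ffun=> ord0].
(* nonzero Pauli strings: index set of the submatrix \hat M *)
Definition nzpstr (n : nat) := {z : pstr n | z != pstr0 n}.

Definition op (n : nat) := basis n -> basis n -> C.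

Definition pauli1 (k : 'I_4) (a b : 'I_2) : C :=
  match val k with
  | 0 => (a == b)%:R
  | 1 => (a != b)%:R
  | 2 => if a == b then 0 else if val a == 0%N then - 'i%C else 'i%C
  | _ => if a == b then (if val a == 0%N then 1 else -1) else 0
  end.

Definition pauli (n : nat) (z : pstr n) : op n :=
  fun a b => \prod_(k < n) pauli1 (z k) (a k) (b k).

Definition mulop (n : nat) (A B : op n) : op n :=
  fun a b => \sum_(c : basis n) A a c * B c b.
Definition adj (n : nat) (A : op n) : op n := fun a b => conjc (A b a).
Definition idop (n : nat) : op n := fun a b => (a == b)%:R.
Definition trace (n : nat) (A : op n) : C := \sum_(a : basis n) A a a.

Definition unitary (n : nat) (U : op n) : Prop :=
  forall a b, mulop U (adj U) a b = @idop n a b.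

Definition clifford (n : nat) (U : op n) : Prop :=
  forall x : pstr n, exists (z : pstr n) (c : C),
    c * conjc c = 1 /\
    forall a b, mulop U (mulop (pauli x) (adj U)) a b = c * pauli z a b.

(* tensor product U1 (x) U2 on n1 + n2 qubits (first n1 qubits for U1) *)
Definition lpart (n1 n2 : nat) (a : basis (n1 + n2)) : basis n1 :=
  [ffun i => a (lshift n2 i)].
Definition rpart (n1 n2 : nat) (a : basis (n1 + n2)) : basis n2 :=
  [ffun j => a (rshift n1 j)].
Definition tensor (n1 n2 : nat) (U1 : op n1) (U2 : op n2) : op (n1 + n2) :=
  fun a b => U1 (@lpart n1 n2 a) (@lpart n1 n2 b) * U2 (@rpart n1 n2 a) (@rpart n1 n2 b).

Definition ptm (n : nat) (U : op n) (z x : pstr n) : C :=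
  ((2%:R : C) ^+ n)^-1 * trace (mulop (pauli z) (mulop U (mulop (pauli x) (adj U)))).

Definition hatM (n : nat) (U : op n) : nzpstr n -> nzpstr n -> C :=
  fun z x => ptm U (val z) (val x).

(* Kronecker product of matrices indexed by finite types (rows/cols as pairs) *)
Definition kron (I1 J1 I2 J2 : finType) (M1 : I1 -> J1 -> C) (M2 : I2 -> J2 -> C)
  : (I1 * I2)%type -> (J1 * J2)%type -> C :=
  fun i j => M1 i.1 j.1 * M2 i.2 j.2.

Definition rownorm (J : finType) (p : R) (r : J -> C) : R :=
  (\sum_(j : J) (Normc.normc (r j)) `^ p) `^ (p^-1).

Definition group_norm (I J : finType) (p q : R) (M : I -> J -> C) : R :=
  ((#|I|%:R)^-1 * \sum_(i : I) (rownorm p (M i)) `^ q) `^ (q^-1).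

Definition group_norm_inf (I J : finType) (p : R) (M : I -> J -> C) : R :=
  \big[Num.max/0]_(i : I) rownorm p (M i).

End Quantum.

(* Main.v *)
Require Import Defs.
From HB Require Import structures.
From mathcomp Require Import all_boot all_order all_algebra.
From mathcomp Require Import reals exp.
From mathcomp Require Import complex.
From mathcomp Require Import ring lra.
From Stdlib Require Import FunctionalExtensionality.
Import Order.TTheory GRing.Theory Num.Theory.
Local Open Scope ring_scope.

Section S.
Variable R : realType.
Local Notation C := (R[i]).
Ltac cc := apply/eqP; rewrite eq_complex /=; apply/andP; split; apply/eqP; ring.

Lemma herm1 (k : 'I_4) (a b : 'I_2) : conjc (pauli1 R k a b) = pauli1 R k b a.
Proof.
case: k => [[|[|[|[|k]]]] Hk] //; case: a => [[|[|a]] Ha] //; case: b => [[|[|b]] Hb] //;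
rewrite /pauli1 /=; cc.
Qed.
Lemma orth1 (j l : 'I_4) :
  \sum_(a : 'I_2) \sum_(b : 'I_2) pauli1 R j a b * conjc (pauli1 R l a b) = 2%:R * (j == l)%:R.
Proof.
rewrite !big_ord_recr !big_ord0 /=.
case: j => [[|[|[|[|j]]]] Hj] //; case: l => [[|[|[|[|l]]]] Hl] //;
rewrite /pauli1 /=; cc.
Qed.
Lemma compl1 (a b c d : 'I_2) :
  \sum_(j : 'I_4) pauli1 R j a b * conjc (pauli1 R j c d) = 2%:R * ((a == c) && (b == d))%:R.
Proof.
rewrite !big_ord_recr !big_ord0 /=.
case: a => [[|[|a]] Ha] //; case: b => [[|[|b]] Hb] //;
case: c => [[|[|c]] Hc] //; case: d => [[|[|d]] Hd] //;
rewrite /pauli1 /=; cc.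
Qed.

Variable n : nat.
Implicit Types A B D : op R n.

Lemma mulopA A B D : mulop A (mulop B D) = mulop (mulop A B) D.
Proof.
apply: functional_extensionality => a; apply: functional_extensionality => b.
rewrite /mulop; under eq_bigr do rewrite big_distrr /=.
rewrite exchange_big; apply: eq_bigr => c _; rewrite big_distrl /=.
by apply: eq_bigr => d _; rewrite mulrA.
Qed.

Lemma trace_mulopC A B : trace (mulop A B) = trace (mulop B A).
Proof.
rewrite /trace /mulop exchange_big; apply: eq_bigr => a _.
by apply: eq_bigr => c _; rewrite mulrC.
Qed.

Lemma sum_delta (T : finType) (a : T) (F : T -> C) :
  \sum_(c : T) (a == c)%:R * F c = F a.
Proof.
rewrite (bigD1 a) //= eqxx mul1r big1 ?addr0 // => c /negbTE.
by rewrite eq_sym => ->; rewrite mul0r.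
Qed.

Lemma mulop1 A : mulop A (@idop R n) = A.
Proof.
apply: functional_extensionality => a; apply: functional_extensionality => b.
rewrite /mulop /idop; under eq_bigr do rewrite mulrC eq_sym.
by rewrite sum_delta.
Qed.

Lemma mul1op A : mulop (@idop R n) A = A.
Proof.
apply: functional_extensionality => a; apply: functional_extensionality => b.
by rewrite /mulop /idop sum_delta.
Qed.

Lemma adjK A : adj (adj A) = A.
Proof.
apply: functional_extensionality => a; apply: functional_extensionality => b.
by rewrite /adj conjcK.
Qed.

Lemma adj_mulop A B : adj (mulop A B) = mulop (adj B) (adj A).
Proof.
apply: functional_extensionality => a; apply: functional_extensionality => b.
rewrite /adj /mulop rmorph_sum; apply: eq_bigr => c _.
by rewrite rmorphM mulrC.
Qed.

Lemma unitaryE U : unitary U -> mulop U (adj U) = @idop R n.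
Proof.
move=> hU; apply: functional_extensionality => a; apply: functional_extensionality => b.
exact: hU.
Qed.

Lemma sumprod (J : finType) (F : 'I_n -> J -> C) :
  \sum_(f : {ffun 'I_n -> J}) \prod_k F k (f k) = \prod_k \sum_(j : J) F k j.
Proof. by rewrite bigA_distr_bigA. Qed.

Lemma prod_eqb (J : finType) (f g : {ffun 'I_n -> J}) :
  \prod_k ((f k == g k)%:R : C) = (f == g)%:R.
Proof.
have [->|ne] := eqVneq f g.
  by rewrite big1 // => k _; rewrite eqxx.
have [k hk] : exists k, f k != g k.
  apply/existsP; apply: contraR ne => /existsPn H; apply/eqP/ffunP => k.
  by have := H k; rewrite negbK => /eqP.
by rewrite (bigD1 k) //= (negbTE hk) mul0r.
Qed.

Lemma prod_eqb2 (J : finType) (f g f' g' : {ffun 'I_n -> J}) :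
  \prod_k (((f k == g k) && (f' k == g' k))%:R : C) = ((f == g) && (f' == g'))%:R.
Proof.
rewrite -mulnb natrM -(@prod_eqb J f g) -(@prod_eqb J f' g') -big_split /=.
by apply: eq_bigr => k _; rewrite -natrM mulnb.
Qed.

Lemma herm_pauli (z : pstr n) a b : conjc (pauli R z a b) = pauli R z b a.
Proof. by rewrite /pauli rmorph_prod; apply: eq_bigr => k _; apply: herm1. Qed.

Lemma adj_pauli (z : pstr n) : adj (pauli R z) = pauli R z.
Proof.
apply: functional_extensionality => a; apply: functional_extensionality => b.
by rewrite /adj herm_pauli.
Qed.

Lemma pauli0 : pauli R (pstr0 n) = @idop R n.
Proof.
apply: functional_extensionality => a; apply: functional_extensionality => b.
rewrite /pauli /idop -prod_eqb; apply: eq_bigr => k _.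
by rewrite /pstr0 ffunE.
Qed.

Definition ip A B := trace (mulop A (adj B)).

Lemma ip_pauli (z w : pstr n) : ip (pauli R z) (pauli R w) = 2%:R ^+ n * (z == w)%:R.
Proof.
rewrite /ip /trace /mulop /adj.
under eq_bigr => a _ do under eq_bigr => c _ do
  rewrite /pauli rmorph_prod -big_split /=.
under eq_bigr => a _ do rewrite (sumprod _ (fun k j => pauli1 R (z k) (a k) j * conjc (pauli1 R (w k) (a k) j))).
rewrite (sumprod _ (fun k i => \sum_(j : 'I_2) pauli1 R (z k) i j * conjc (pauli1 R (w k) i j))).
under eq_bigr do rewrite orth1.
by rewrite big_split /= prod_eqb prodr_const card_ord.
Qed.

Lemma compl_pauli (a b c d : basis n) :
  \sum_(x : pstr n) pauli R x a b * conjc (pauli R x c d) = 2%:R ^+ n * ((a == c) && (b == d))%:R.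
Proof.
under eq_bigr do rewrite /pauli rmorph_prod -big_split /=.
rewrite (sumprod _ (fun k j => pauli1 R j (a k) (b k) * conjc (pauli1 R j (c k) (d k)))).
under eq_bigr do rewrite compl1.
by rewrite big_split /= prod_eqb2 prodr_const card_ord.
Qed.


Lemma sum_delta2 (T1 T2 : finType) (a : T1) (b : T2) (F : T1 -> T2 -> C) :
  \sum_(c : T1) \sum_(d : T2) ((a == c) && (b == d))%:R * F c d = F a b.
Proof.
under eq_bigr => c _ do under eq_bigr => d _ do rewrite -mulnb natrM -mulrA.
under eq_bigr => c _ do rewrite -big_distrr /=.
by rewrite sum_delta sum_delta.
Qed.

Lemma parseval (Cm Dm : op R n) :
  \sum_(x : pstr n) trace (mulop (pauli R x) Cm) * conjc (trace (mulop (pauli R x) Dm))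
  = 2%:R ^+ n * ip Cm Dm.
Proof.
have E : forall x : pstr n, trace (mulop (pauli R x) Cm) * conjc (trace (mulop (pauli R x) Dm))
  = \sum_(a : basis n) \sum_(b : basis n) \sum_(c : basis n) \sum_(d : basis n)
      (Cm b a * conjc (Dm d c)) * (pauli R x a b * conjc (pauli R x c d)).
  move=> x; rewrite /trace /mulop big_distrl; apply: eq_bigr => a _.
  rewrite big_distrl; apply: eq_bigr => b _.
  rewrite rmorph_sum big_distrr; apply: eq_bigr => c _.
  rewrite rmorph_sum big_distrr; apply: eq_bigr => d _.
  by rewrite rmorphM /=; ring.
under eq_bigr do rewrite E.
rewrite exchange_big; under eq_bigr do rewrite exchange_big.
under eq_bigr do under eq_bigr do rewrite exchange_big.
under eq_bigr do under eq_bigr do under eq_bigr do rewrite exchange_big.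
under eq_bigr do under eq_bigr do under eq_bigr do under eq_bigr do
  rewrite -big_distrr /= compl_pauli.
rewrite /ip /trace /mulop /adj exchange_big big_distrr; apply: eq_bigr => a _.
rewrite big_distrr; apply: eq_bigr => b _ /=.
under eq_bigr do under eq_bigr do rewrite mulrCA mulrC [X in X * _]mulrC -mulrA.
by rewrite (sum_delta2 _ _ b a (fun c d => Cm a b * conjc (Dm d c) * 2%:R ^+ n)) mulrC.
Qed.

Lemma compl_op (X : op R n) (a b : basis n) :
  \sum_(z : pstr n) trace (mulop (pauli R z) X) * pauli R z a b = 2%:R ^+ n * X a b.
Proof.
have E : forall z : pstr n, trace (mulop (pauli R z) X) * pauli R z a b =
   \sum_(d : basis n) \sum_(c : basis n) X c d * (pauli R z a b * conjc (pauli R z c d)).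
  move=> z; rewrite /trace /mulop big_distrl; apply: eq_bigr => d _.
  rewrite big_distrl; apply: eq_bigr => c _.
  by rewrite herm_pauli /=; ring.
under eq_bigr do rewrite E.
rewrite exchange_big; under eq_bigr do rewrite exchange_big.
under eq_bigr do under eq_bigr do rewrite -big_distrr /= compl_pauli.
under eq_bigr do under eq_bigr do rewrite mulrCA mulrC [X in X * _]mulrC -mulrA.
rewrite exchange_big /=.
by rewrite (sum_delta2 _ _ a b (fun c d => X c d * 2%:R ^+ n)) mulrC.
Qed.


Lemma normc_sqr (x : C) : x * conjc x = (((Normc.normc x) ^+ 2)%:C)%C.
Proof. by rewrite -sqr_normc rmorphXn. Qed.

Section Unit.
Variable U : op R n.
Hypothesis hU : unitary U.

Lemma ptm_alt z x : ptm U z x =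
  (2%:R ^+ n)^-1 * trace (mulop (pauli R x) (mulop (adj U) (mulop (pauli R z) U))).
Proof.
by rewrite /ptm mulopA trace_mulopC -mulopA.
Qed.

Lemma conj_inv2 : conjc ((2%:R : C) ^+ n)^-1 = (2%:R ^+ n)^-1.
Proof. by rewrite fmorphV rmorphXn rmorph_nat. Qed.

Lemma trace_sandwich z w :
  ip (mulop (adj U) (mulop (pauli R z) U)) (mulop (adj U) (mulop (pauli R w) U))
  = 2%:R ^+ n * (z == w)%:R.
Proof.
rewrite /ip !adj_mulop adjK adj_pauli !mulopA trace_mulopC !mulopA (unitaryE _ hU) mul1op.
rewrite -(mulopA (pauli R z) U) (unitaryE _ hU) mulop1.
by rewrite -ip_pauli /ip adj_pauli.
Qed.

Lemma row_orth z w :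
  \sum_(x : pstr n) ptm U z x * conjc (ptm U w x) = (z == w)%:R.
Proof.
under eq_bigr do rewrite !ptm_alt rmorphM fmorphV rmorphXn rmorph_nat mulrACA.
rewrite -big_distrr /= parseval trace_sandwich.
have h2 : (2%:R : C) ^+ n != 0 by rewrite expf_eq0 pnatr_eq0 andbF.
by rewrite !mulrA divfK // mulVf // mul1r.
Qed.

Lemma ptm_col0 z : ptm U z (pstr0 n) = (z == pstr0 n)%:R.
Proof.
rewrite /ptm pauli0 mul1op (unitaryE _ hU).
have -> : @idop R n = adj (pauli R (pstr0 n)) by rewrite adj_pauli pauli0.
have h2 : (2%:R : C) ^+ n != 0 by rewrite expf_eq0 pnatr_eq0 andbF.
by rewrite -/(ip _ _) ip_pauli mulrA mulVf // mul1r.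
Qed.

Lemma row_norm z : \sum_(x : pstr n) (Normc.normc (ptm U z x)) ^+ 2 = 1.
Proof.
apply: (@complexI R); rewrite raddf_sum /=.
under eq_bigr do rewrite -normc_sqr.
by rewrite row_orth eqxx.
Qed.

Lemma normc_ge0 (x : C) : 0 <= Normc.normc x.
Proof. by case: x => a b; exact: sqrtr_ge0. Qed.

Lemma normc_eq1 (c : C) : c * conjc c = 1 -> Normc.normc c = 1.
Proof.
rewrite normc_sqr => h0.
have /(@complexI R) h : ((Normc.normc c ^+ 2)%:C)%C = ((1:R)%:C)%C by rewrite h0.
by apply/eqP; rewrite -(@sqrp_eq1 _ (Normc.normc c)) ?normc_ge0 // h.
Qed.

Lemma h2n : (2%:R : C) ^+ n != 0.
Proof. by rewrite expf_eq0 pnatr_eq0 andbF. Qed.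

Lemma clifford_entries : clifford U ->
  forall z x, Normc.normc (ptm U z x) = 0 \/ Normc.normc (ptm U z x) = 1.
Proof.
move=> hc z x; have [w [c [hcc hX]]] := hc x.
have -> : ptm U z x = c * (z == w)%:R.
  rewrite /ptm.
  have -> : mulop U (mulop (pauli R x) (adj U)) = fun a b => c * pauli R w a b.
    by apply: functional_extensionality => a; apply: functional_extensionality => b.
  have -> : trace (mulop (pauli R z) (fun a b => c * pauli R w a b)) =
            c * ip (pauli R z) (pauli R w).
    rewrite /ip /trace /mulop big_distrr; apply: eq_bigr => a _.
    rewrite big_distrr; apply: eq_bigr => b _ /=.
    by rewrite /adj herm_pauli mulrCA.
  by rewrite ip_pauli mulrCA mulKf ?h2n.
rewrite Normc.normcM; case: eqP => _; last by left; rewrite Normc.normc0 mulr0.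
by right; rewrite Normc.normc1 mulr1 normc_eq1.
Qed.

Lemma row_single z x : Normc.normc (ptm U z x) = 1 ->
  forall y, y != x -> ptm U z y = 0.
Proof.
move=> h1 y ny; apply: (@Normc.eq0_normc R).
have := row_norm z; rewrite (bigD1 x) //= h1 expr1n => /(congr1 (fun t => t - 1)) /=.
rewrite addrC addrK subrr => /psumr_eq0P H.
have := H (fun i _ => sqr_ge0 _) y ny.
by move/eqP; rewrite sqrf_eq0 => /eqP.
Qed.

Lemma entries_clifford :
  (forall z x, Normc.normc (ptm U z x) = 0 \/ Normc.normc (ptm U z x) = 1) -> clifford U.
Proof.
move=> H01.
pose t := fun z x => Normc.normc (ptm U z x) ^+ 2.
have uniq1 : forall x z w, Normc.normc (ptm U z x) = 1 -> Normc.normc (ptm U w x) = 1 -> z = w.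
  move=> x z w hz hw; apply/eqP; apply/negPn/negP => nzw.
  have := row_orth z w; rewrite (negbTE nzw) (bigD1 x) //= big1 ?addr0.
    move/eqP; rewrite mulf_eq0 conjc_eq0 => /orP [] /eqP h.
    - by move: hz; rewrite h Normc.normc0 => /eqP; rewrite eq_sym oner_eq0.
    - by move: hw; rewrite h Normc.normc0 => /eqP; rewrite eq_sym oner_eq0.
  by move=> y ny; rewrite (row_single _ _ hz _ ny) mul0r.
have cnt_le1 : forall x, \sum_z t z x <= 1.
  move=> x; case: (pickP (fun z => Normc.normc (ptm U z x) == 1)) => [z0 /eqP h0 | hn].
    rewrite (bigD1 z0) //= /t h0 expr1n big1 ?addr0 // => z nz.
    case: (H01 z x) => h; first by rewrite h expr2 mulr0.
    by rewrite (uniq1 _ _ _ h h0) eqxx in nz.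
  rewrite big1 // => z _; have := hn z; case: (H01 z x) => h; rewrite /t h.
    by rewrite expr2 mulr0.
  by rewrite eqxx.
have tot : \sum_x \sum_z t z x = #|pstr n|%:R.
  rewrite exchange_big /=; rewrite /t; under eq_bigr do rewrite row_norm.
  by rewrite sumr_const.
have col1 : forall x, \sum_z t z x = 1.
  have e : \sum_x (1 - \sum_z t z x) = 0 by rewrite sumrB tot sumr_const subrr.
  move=> x.
  have hge : forall y : pstr n, true -> 0 <= 1 - \sum_z t z y.
    by move=> y _; rewrite subr_ge0 cnt_le1.
  have := psumr_eq0P hge e (i:=x) isT.
  by move/eqP; rewrite subr_eq0 => /eqP <-.
move=> x.
have [w hw] : exists w, Normc.normc (ptm U w x) = 1.
  case: (pickP (fun z => Normc.normc (ptm U z x) == 1)) => [w /eqP hw | hn].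
    by exists w.
  have := col1 x; rewrite big1; first by move/eqP; rewrite eq_sym oner_eq0.
  move=> z _; have := hn z; case: (H01 z x) => h; rewrite /t h.
    by rewrite expr2 mulr0.
  by rewrite eqxx.
exists w, (ptm U w x); split.
  by rewrite normc_sqr hw expr1n.
move=> a b.
have E := compl_op (mulop U (mulop (pauli R x) (adj U))) a b.
have -> : mulop U (mulop (pauli R x) (adj U)) a b = \sum_z ptm U z x * pauli R z a b.
  rewrite /ptm; under eq_bigr do rewrite -mulrA.
  by rewrite -big_distrr /= E mulKf ?h2n.
rewrite (bigD1 w) //= big1 ?addr0 // => z nz.
case: (H01 z x) => h.
  by rewrite (Normc.eq0_normc h) mul0r.
by rewrite (uniq1 _ _ _ h hw) eqxx in nz.
Qed.

End Unit.

End S.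

Section Tens.
Variable R : realType.
Local Notation C := (R[i]).
Variables n1 n2 : nat.

Lemma split_l (i : 'I_n1) : split (lshift n2 i) = inl i.
Proof. exact: (@unsplitK n1 n2 (inl i)). Qed.
Lemma split_r (j : 'I_n2) : split (rshift n1 j) = inr j.
Proof. exact: (@unsplitK n1 n2 (inr j)). Qed.

Definition lpf {T : finType} (f : {ffun 'I_(n1 + n2) -> T}) : {ffun 'I_n1 -> T} :=
  [ffun i => f (lshift n2 i)].
Definition rpf {T : finType} (f : {ffun 'I_(n1 + n2) -> T}) : {ffun 'I_n2 -> T} :=
  [ffun j => f (rshift n1 j)].
Definition joinf {T : finType} (f1 : {ffun 'I_n1 -> T}) (f2 : {ffun 'I_n2 -> T})
  : {ffun 'I_(n1 + n2) -> T} :=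
  [ffun i => match split i with inl j => f1 j | inr k => f2 k end].

Lemma lpf_join T f1 f2 : lpf (@joinf T f1 f2) = f1.
Proof. by apply/ffunP => i; rewrite !ffunE split_l. Qed.
Lemma rpf_join T f1 f2 : rpf (@joinf T f1 f2) = f2.
Proof. by apply/ffunP => i; rewrite !ffunE split_r. Qed.
Lemma join_lr (T : finType) (f : {ffun 'I_(n1 + n2) -> T}) : joinf (lpf f) (rpf f) = f.
Proof.
apply/ffunP => i; rewrite ffunE; case: splitP => [j e|k e]; rewrite ffunE;
  congr (f _); apply: val_inj => //=.
Qed.

Lemma joinf_inj (T : finType) (f1 g1 : {ffun 'I_n1 -> T}) (f2 g2 : {ffun 'I_n2 -> T}) : @joinf T f1 f2 = joinf g1 g2 -> f1 = g1 /\ f2 = g2.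
Proof.
move=> e; split; first by rewrite -(lpf_join _ f1 f2) e lpf_join.
by rewrite -(rpf_join _ f1 f2) e rpf_join.
Qed.

Lemma sum_join (T : finType) (F : {ffun 'I_(n1 + n2) -> T} -> C) :
  \sum_f F f = \sum_(f1 : {ffun 'I_n1 -> T}) \sum_(f2 : {ffun 'I_n2 -> T}) F (joinf f1 f2).
Proof.
rewrite pair_big /=.
rewrite (reindex (fun p : {ffun 'I_n1 -> T} * {ffun 'I_n2 -> T} => joinf p.1 p.2)) //.
exists (fun f => (lpf f, rpf f)) => [[f1 f2] _|f _] /=.
  by rewrite lpf_join rpf_join.
by rewrite join_lr.
Qed.

Lemma sum_joinR (T : finType) (F : {ffun 'I_(n1 + n2) -> T} -> R) :
  \sum_f F f = \sum_(f1 : {ffun 'I_n1 -> T}) \sum_(f2 : {ffun 'I_n2 -> T}) F (joinf f1 f2).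
Proof.
rewrite pair_big /=.
rewrite (reindex (fun p : {ffun 'I_n1 -> T} * {ffun 'I_n2 -> T} => joinf p.1 p.2)) //.
exists (fun f => (lpf f, rpf f)) => [[f1 f2] _|f _] /=.
  by rewrite lpf_join rpf_join.
by rewrite join_lr.
Qed.

Lemma lpart_join (a1 : basis n1) (a2 : basis n2) : lpart (joinf a1 a2) = a1.
Proof. exact: lpf_join. Qed.
Lemma rpart_join (a1 : basis n1) (a2 : basis n2) : rpart (joinf a1 a2) = a2.
Proof. exact: rpf_join. Qed.

Lemma mulop_tensor (A1 B1 : op R n1) (A2 B2 : op R n2) :
  mulop (tensor A1 A2) (tensor B1 B2) = tensor (mulop A1 B1) (mulop A2 B2).
Proof.
apply: functional_extensionality => a; apply: functional_extensionality => b.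
rewrite /mulop /tensor sum_join big_distrl; apply: eq_bigr => c1 _.
rewrite big_distrr; apply: eq_bigr => c2 _ /=.
by rewrite lpart_join rpart_join mulrACA.
Qed.

Lemma adj_tensor (A1 : op R n1) (A2 : op R n2) : adj (tensor A1 A2) = tensor (adj A1) (adj A2).
Proof.
apply: functional_extensionality => a; apply: functional_extensionality => b.
by rewrite /adj /tensor rmorphM.
Qed.

Lemma trace_tensor (A1 : op R n1) (A2 : op R n2) : trace (tensor A1 A2) = trace A1 * trace A2.
Proof.
rewrite /trace /tensor sum_join big_distrl; apply: eq_bigr => c1 _.
rewrite big_distrr; apply: eq_bigr => c2 _ /=.
by rewrite lpart_join rpart_join.
Qed.

Lemma pauli_join (z1 : pstr n1) (z2 : pstr n2) :
  pauli R (joinf z1 z2) = tensor (pauli R z1) (pauli R z2).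
Proof.
apply: functional_extensionality => a; apply: functional_extensionality => b.
rewrite /pauli /tensor big_split_ord /=; congr (_ * _); apply: eq_bigr => i _;
  by rewrite !ffunE ?split_l ?split_r.
Qed.

Lemma ptm_tensor (U1 : op R n1) (U2 : op R n2) z1 z2 x1 x2 :
  ptm (tensor U1 U2) (joinf z1 z2) (joinf x1 x2) = ptm U1 z1 x1 * ptm U2 z2 x2.
Proof.
rewrite /ptm !pauli_join adj_tensor !mulop_tensor trace_tensor exprD invfM.
by rewrite mulrACA.
Qed.

Lemma join0 : joinf (pstr0 n1) (pstr0 n2) = pstr0 (n1 + n2).
Proof. by apply/ffunP => i; rewrite !ffunE; case: split => j; rewrite ffunE. Qed.

End Tens.

Section Real.
Variable R : realType.

Lemma sum_nz (n : nat) (F : pstr n -> R) :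
  \sum_(x : pstr n) F x = F (pstr0 n) + \sum_(x : nzpstr n) F (val x).
Proof.
rewrite (bigD1 (pstr0 n)) //=; congr (_ + _).
have := @big_sub R 0 +%R _ [pred x | x != pstr0 n] F.
move=> ->. reflexivity.
Qed.

Lemma card_nz n : (#|{: nzpstr n}| + 1 = 4 ^ n)%N.
Proof.
rewrite card_sig cardC1 card_ffun !card_ord addn1 prednK //.
by rewrite expn_gt0.
Qed.

Lemma powR_lt_dec (r p s : R) : 0 < r < 1 -> p < s -> r `^ s < r `^ p.
Proof.
move=> /andP [r0 r1] ps.
rewrite /powR gt_eqF // ltr_expR ltr_nM2r //.
by apply: ln_lt0; rewrite r0 r1.
Qed.

Lemma term_cmp (r p : R) : 0 <= r <= 1 -> 0 < p ->
  (p < 2 -> r ^+ 2 <= r `^ p) /\ (2 < p -> r `^ p <= r ^+ 2) /\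
  (p != 2 -> (r `^ p = r ^+ 2 <-> r = 0 \/ r = 1)).
Proof.
move=> /andP [r0 r1] p0.
have e2 : r ^+ 2 = r `^ 2 by rewrite -powR_mulrn.
have [->|rn0] := eqVneq r 0.
  rewrite (powR0 (lt0r_neq0 p0)) expr2 mulr0; do 2!split => //; by split => // _; left.
have [->|rn1] := eqVneq r 1.
  rewrite powR1 expr1n; do 2!split => //; by split => // _; right.
have rr : 0 < r < 1 by rewrite lt_neqAle eq_sym rn0 r0 lt_neqAle rn1 r1.
rewrite e2; split; first by move=> hp; apply/ltW/powR_lt_dec.
split; first by move=> hp; apply/ltW/powR_lt_dec.
move=> hp2; split; last by case=> /eqP; rewrite ?(negbTE rn0) ?(negbTE rn1).
move=> e; exfalso; case: (ltgtP p 2) hp2 => // hp _.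
  by have := @powR_lt_dec r _ _ rr hp; rewrite e ltxx.
by have := @powR_lt_dec r _ _ rr hp; rewrite e ltxx.
Qed.

Lemma row_cmp (J : finType) (r : J -> R) (p : R) :
  (forall j, 0 <= r j) -> \sum_j r j ^+ 2 = 1 -> 0 < p ->
  (p < 2 -> 1 <= \sum_j r j `^ p) /\ (2 < p -> \sum_j r j `^ p <= 1) /\
  (p == 2 -> \sum_j r j `^ p = 1) /\ (0 < \sum_j r j `^ p) /\
  (p != 2 -> (\sum_j r j `^ p = 1 <-> forall j, r j = 0 \/ r j = 1)).
Proof.
move=> r0 s1 p0.
have r1 : forall j, r j <= 1.
  move=> j; rewrite -(expr_le1 (n := 2)) // -s1 (bigD1 j) //= lerDl.
  by apply: sumr_ge0 => i _; apply: sqr_ge0.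
have hr : forall j, 0 <= r j <= 1 by move=> j; rewrite r0 r1.
have E : \sum_j r j `^ p = 1 + \sum_j (r j `^ p - r j ^+ 2).
  by rewrite sumrB s1 addrC subrK.
have dge : p < 2 -> forall j, 0 <= r j `^ p - r j ^+ 2.
  by move=> hp j; rewrite subr_ge0; case: (@term_cmp (r j) p (hr j) p0) => h _; apply: h.
have dle : 2 < p -> forall j, 0 <= - (r j `^ p - r j ^+ 2).
  by move=> hp j; rewrite oppr_ge0 subr_le0; case: (@term_cmp (r j) p (hr j) p0) => _ [h _]; apply: h.
split.
  move=> hp; rewrite E lerDl; apply: sumr_ge0 => j _; exact: (dge hp).
split.
  move=> hp; rewrite E; have : 0 <= \sum_j - (r j `^ p - r j ^+ 2).
    by apply: sumr_ge0 => j _; exact: (dle hp).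
  rewrite sumrN oppr_ge0 => h; lra.
split.
  move=> /eqP e; rewrite e; rewrite -{}[X in _ = X]s1; apply: eq_bigr => j _; exact: (powR_mulrn 2 (r0 j)).
split.
  rewrite lt_def sumr_ge0 ?andbT; last by move=> j _; apply: powR_ge0.
  apply/negP => /eqP h.
  have := psumr_eq0P (fun j _ => powR_ge0 (r j) p) h => hz.
  move: s1; rewrite big1 => [/eqP|j _]; first by rewrite eq_sym oner_eq0.
  by rewrite (powR_eq0_eq0 (hz j isT)) expr2 mulr0.
move=> hp2; rewrite E; split.
  move=> /(congr1 (fun t => t - 1)) /=; rewrite addrAC !subrr add0r => hs j.
  have hd : r j `^ p - r j ^+ 2 = 0.
    case: (ltgtP p 2) hp2 => // hp _.
      by have := psumr_eq0P (fun j _ => dge hp j) hs; apply.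
    have hs' : \sum_j - (r j `^ p - r j ^+ 2) = 0 by rewrite sumrN hs oppr0.
    by have := psumr_eq0P (fun j _ => dle hp j) hs' (i:=j) isT => /eqP; rewrite oppr_eq0 => /eqP.
  by case: (@term_cmp (r j) p (hr j) p0) => _ [_ /(_ hp2) [h _]]; apply: h; apply/eqP; rewrite -subr_eq0 hd.
move=> h01; rewrite big1 ?addr0 // => j _.
by case: (@term_cmp (r j) p (hr j) p0) => _ [_ /(_ hp2) [_ h]]; rewrite h ?subrr.
Qed.
End Real.


Arguments row_single {R n U} hU z x _ y _.
Arguments ptm_col0 {R n U} hU z.
Arguments row_norm {R n U} hU z.
Arguments clifford_entries {R n U} _ z x.
Arguments entries_clifford {R n U} hU _ x.
Arguments row_cmp {R J r p} _ _ _.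
Arguments row_orth {R n U} hU z w.

Section PerU.
Variable R : realType.
Variable n : nat.
Variable U : op R n.
Hypothesis hU : unitary U.
Variable p : R.
Hypothesis p0 : 0 < p.

Definition Hrow (z : pstr n) := \sum_(x : pstr n) Normc.normc (ptm U z x) `^ p.

Lemma Hrow0 : Hrow (pstr0 n) = 1.
Proof.
have h1 : ptm U (pstr0 n) (pstr0 n) = 1 by rewrite (ptm_col0 hU) eqxx.
rewrite /Hrow (bigD1 (pstr0 n)) //= h1 Normc.normc1 powR1 big1 ?addr0 // => x nx.
rewrite (row_single hU _ (pstr0 n)) ?h1 ?Normc.normc1 //.
by rewrite Normc.normc0 powR0 // lt0r_neq0.
Qed.

Lemma Hrow_nz (z : nzpstr n) :
  \sum_(x : nzpstr n) Normc.normc (hatM U z x) `^ p = Hrow (val z).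
Proof.
rewrite /Hrow sum_nz (ptm_col0 hU).
case: z => z nz /=; rewrite (negbTE nz).
by rewrite Normc.normc0 powR0 ?lt0r_neq0 // add0r.
Qed.

Lemma Hrow_props z :
  (p < 2 -> 1 <= Hrow z) /\ (2 < p -> Hrow z <= 1) /\ (p == 2 -> Hrow z = 1) /\
  (0 < Hrow z) /\
  (p != 2 -> (Hrow z = 1 <-> forall x, Normc.normc (ptm U z x) = 0 \/ Normc.normc (ptm U z x) = 1)).
Proof.
exact: (row_cmp (fun x => normc_ge0 _ _) (row_norm hU z) p0).
Qed.

Lemma clifford_H : p != 2 -> (clifford U <-> forall z : nzpstr n, Hrow (val z) = 1).
Proof.
move=> p2; split.
  move=> hc z; have [_ [_ [_ [_ /(_ p2) [_ h]]]]] := Hrow_props (val z).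
  by apply: h => x; apply: clifford_entries.
move=> hz; apply: entries_clifford => // z x.
have [_ [_ [_ [_ /(_ p2) [h _]]]]] := Hrow_props z; apply: h.
have [->|nz] := eqVneq z (pstr0 n); first exact: Hrow0.
exact: (hz (exist _ z nz)).
Qed.

End PerU.

Lemma final_real (R : realType) (N1 N2 S1 S2 : R) : 0 < N1 -> 0 < N2 ->
  let A := (N1 * N2)^-1 * (S1 * S2) in
  let B := (((N1 + 1) * (N2 + 1) - 1)^-1 * ((1 + S1) * (1 + S2) - 1)) in
  (N1 <= S1 -> N2 <= S2 -> B <= A) /\ (0 < S1 <= N1 -> 0 < S2 <= N2 -> A <= B) /\
  ((N1 <= S1 /\ N2 <= S2 \/ 0 < S1 <= N1 /\ 0 < S2 <= N2) -> A = B -> S1 = N1 /\ S2 = N2) /\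
  (S1 = N1 -> S2 = N2 -> A = B).
Proof.
move=> h1 h2 A B.
have hD : 0 < (N1 + 1) * (N2 + 1) - 1 by nra.
have hN : 0 < N1 * N2 * ((N1 + 1) * (N2 + 1) - 1) by rewrite !mulr_gt0.
have key : A - B = (N1 * S1 * (S2 - N2) + N2 * S2 * (S1 - N1)) / (N1 * N2 * ((N1 + 1) * (N2 + 1) - 1)).
  rewrite /A /B; field.
  by rewrite (lt0r_neq0 hD) (lt0r_neq0 h1) (lt0r_neq0 h2).
split.
  move=> a b; rewrite -subr_ge0 key; apply: divr_ge0; last exact: ltW.
  apply: addr_ge0; apply: mulr_ge0; rewrite ?subr_ge0 //; apply: mulr_ge0; lra.
split.
  move=> /andP [a1 a2] /andP [b1 b2]; rewrite -subr_le0 key.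
  apply: mulr_le0_ge0; last by rewrite invr_ge0 ltW.
  have : 0 <= N1 * S1 * (N2 - S2) by apply: mulr_ge0; [apply: mulr_ge0|]; lra.
  have : 0 <= N2 * S2 * (N1 - S1) by apply: mulr_ge0; [apply: mulr_ge0|]; lra.
  lra.
have canc : forall a b : R, 0 < a -> a * b = 0 -> b = 0.
  by move=> a b ha /eqP; rewrite mulf_eq0 (gt_eqF ha) /= => /eqP.
split.
  move=> hc eAB; have : A - B = 0 by rewrite eAB subrr.
  rewrite key => /eqP; rewrite mulf_eq0 invr_eq0 (gt_eqF hN) orbF => /eqP hz.
  case: hc => [[a b]|[/andP [a1 a2] /andP [b1 b2]]].
    have hS1 : 0 < S1 by lra.
    have hS2 : 0 < S2 by lra.
    have t1 : 0 <= N1 * S1 * (S2 - N2) by apply: mulr_ge0; [apply: mulr_ge0|]; lra.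
    have t2 : 0 <= N2 * S2 * (S1 - N1) by apply: mulr_ge0; [apply: mulr_ge0|]; lra.
    have z1 : N1 * S1 * (S2 - N2) = 0 by lra.
    have z2 : N2 * S2 * (S1 - N1) = 0 by lra.
    have := canc _ _ (mulr_gt0 h1 hS1) z1; have := canc _ _ (mulr_gt0 h2 hS2) z2.
    by move=> *; split; lra.
  have t1 : 0 <= N1 * S1 * (N2 - S2) by apply: mulr_ge0; [apply: mulr_ge0|]; lra.
  have t2 : 0 <= N2 * S2 * (N1 - S1) by apply: mulr_ge0; [apply: mulr_ge0|]; lra.
  have z1 : N1 * S1 * (S2 - N2) = 0 by lra.
  have z2 : N2 * S2 * (S1 - N1) = 0 by lra.
  have := canc _ _ (mulr_gt0 h1 a1) z1; have := canc _ _ (mulr_gt0 h2 b1) z2.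
  by move=> *; split; lra.
move=> e1 e2; apply/eqP; rewrite -subr_eq0 key e1 e2.
by rewrite !subrr !mulr0 addr0 mul0r.
Qed.

Arguments ptm_col0 {R n U} hU z.
Arguments Hrow {R n} U p z.
Arguments Hrow0 {R n U} hU {p} p0.
Arguments Hrow_nz {R n U} hU {p} p0 z.
Arguments Hrow_props {R n U} hU {p} p0 z.
Arguments clifford_H {R n U} hU {p} p0 _.

Lemma nzel_proof n : (0 < n)%N -> [ffun=> (ord_max : 'I_4)] != pstr0 n.
Proof.
move=> hn; apply/eqP => /ffunP /(_ (Ordinal hn)); rewrite !ffunE.
by move/(congr1 val).
Qed.
Definition nzel n (hn : (0 < n)%N) : nzpstr n := exist (fun z : pstr n => z != pstr0 n) _ (nzel_proof n hn).

Section Two.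
Variable R : realType.
Variables n1 n2 : nat.
Variables (U1 : op R n1) (U2 : op R n2).
Hypotheses (hU1 : unitary U1) (hU2 : unitary U2).
Variable p : R.
Hypothesis p0 : 0 < p.

Local Notation H1 := (Hrow U1 p).
Local Notation H2 := (Hrow U2 p).

Lemma H1_ge0 z : 0 <= H1 z.
Proof. by have [_ [_ [_ [h _]]]] := Hrow_props hU1 p0 z; exact: ltW. Qed.
Lemma H2_ge0 z : 0 <= H2 z.
Proof. by have [_ [_ [_ [h _]]]] := Hrow_props hU2 p0 z; exact: ltW. Qed.

Lemma rowK (z : nzpstr n1 * nzpstr n2) :
  rownorm p (kron (hatM U1) (hatM U2) z) = (H1 (val z.1) * H2 (val z.2)) `^ p^-1.
Proof.
rewrite /rownorm /kron; congr (_ `^ _).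
under eq_bigr do rewrite Normc.normcM powRM ?normc_ge0 //.
rewrite -(pair_bigA _ (fun x1 x2 => Normc.normc (hatM U1 z.1 x1) `^ p * Normc.normc (hatM U2 z.2 x2) `^ p)) /=.
by rewrite -big_distrlr /= (Hrow_nz hU1 p0) (Hrow_nz hU2 p0).
Qed.

Lemma rowT (z : nzpstr (n1 + n2)) :
  rownorm p (hatM (tensor U1 U2) z) = (H1 (lpf n1 n2 (val z)) * H2 (rpf n1 n2 (val z))) `^ p^-1.
Proof.
rewrite /rownorm /hatM; congr (_ `^ _).
pose f := fun x : pstr (n1 + n2) => Normc.normc (ptm (tensor U1 U2) (val z) x) `^ p.
have e := sum_nz _ _ f.
have f0 : f (pstr0 _) = 0.
  rewrite /f -(join_lr n1 n2 _ (val z)) -[X in ptm _ _ X](join0 n1 n2) ptm_tensor (ptm_col0 hU1) (ptm_col0 hU2).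
  have : ~~ ((lpf n1 n2 (val z) == pstr0 n1) && (rpf n1 n2 (val z) == pstr0 n2)).
    clear f e; case: z => z nz /=; apply: contra nz => /andP [/eqP a /eqP b].
    by rewrite -(join_lr n1 n2 _ z) a b join0.
  rewrite -natrM mulnb => /negbTE ->.
  by rewrite Normc.normc0 powR0 // lt0r_neq0.
have -> : \sum_(x : nzpstr (n1 + n2)) Normc.normc (ptm (tensor U1 U2) (val z) (val x)) `^ p
   = \sum_(x : pstr (n1 + n2)) f x by rewrite e f0 add0r.
set a1 := lpf n1 n2 (val z); set a2 := rpf n1 n2 (val z).
have ev : val z = joinf n1 n2 a1 a2 by rewrite /a1 /a2 join_lr.
rewrite /f ev sum_joinR.
under eq_bigr do under eq_bigr do rewrite ptm_tensor Normc.normcM powRM ?normc_ge0 //.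
by rewrite -big_distrlr.
Qed.

Variable q : R.
Hypothesis q0 : 0 < q.

Definition G1 z := (H1 z `^ p^-1) `^ q.
Definition G2 z := (H2 z `^ p^-1) `^ q.
Definition S1 := \sum_(z : nzpstr n1) G1 (val z).
Definition S2 := \sum_(z : nzpstr n2) G2 (val z).
Definition N1 : R := #|{: nzpstr n1}|%:R.
Definition N2 : R := #|{: nzpstr n2}|%:R.

Lemma G1_0 : G1 (pstr0 n1) = 1.
Proof. by rewrite /G1 (Hrow0 hU1 p0) !powR1. Qed.
Lemma G2_0 : G2 (pstr0 n2) = 1.
Proof. by rewrite /G2 (Hrow0 hU2 p0) !powR1. Qed.

Lemma gnK : group_norm p q (kron (hatM U1) (hatM U2)) = ((N1 * N2)^-1 * (S1 * S2)) `^ q^-1.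
Proof.
rewrite /group_norm card_prod natrM; congr ((_ * _) `^ _).
under eq_bigr do rewrite rowK powRM ?H1_ge0 ?H2_ge0 // powRM ?powR_ge0 //.
rewrite -(pair_bigA _ (fun x1 x2 => G1 (val x1) * G2 (val x2))) /=.
by rewrite -big_distrlr.
Qed.

Lemma card12 : (#|{: nzpstr (n1 + n2)}|%:R : R) = (N1 + 1) * (N2 + 1) - 1.
Proof.
have := card_nz (n1 + n2); rewrite expnD -(card_nz n1) -(card_nz n2).
move/(congr1 (fun k => (k%:R : R))); rewrite natrD natrM !natrD /N1 /N2 => h.
lra.
Qed.

Lemma lpf0 : lpf n1 n2 (pstr0 (n1 + n2)) = pstr0 n1.
Proof. by apply/ffunP => i; rewrite !ffunE. Qed.
Lemma rpf0 : rpf n1 n2 (pstr0 (n1 + n2)) = pstr0 n2.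
Proof. by apply/ffunP => i; rewrite !ffunE. Qed.

Lemma gnT : group_norm p q (hatM (tensor U1 U2)) =
  (((N1 + 1) * (N2 + 1) - 1)^-1 * ((1 + S1) * (1 + S2) - 1)) `^ q^-1.
Proof.
rewrite /group_norm card12; congr ((_ * _) `^ _).
under eq_bigr do rewrite rowT powRM ?H1_ge0 ?H2_ge0 // powRM ?powR_ge0 //.
have e2 : \sum_(z : pstr (n1 + n2)) G1 (lpf n1 n2 z) * G2 (rpf n1 n2 z) = (1 + S1) * (1 + S2).
  rewrite sum_joinR; under eq_bigr do under eq_bigr do rewrite lpf_join rpf_join.
  by rewrite -big_distrlr /= !sum_nz G1_0 G2_0.
have e := sum_nz _ _ (fun z => G1 (lpf n1 n2 z) * G2 (rpf n1 n2 z)).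
rewrite e2 /= lpf0 rpf0 G1_0 G2_0 mulr1 in e.
rewrite e addrC addKr.
by apply: eq_bigr => i _.
Qed.

Lemma G_H1 z : G1 z = H1 z `^ (p^-1 * q).
Proof. by rewrite /G1 powRrM. Qed.
Lemma G_H2 z : G2 z = H2 z `^ (p^-1 * q).
Proof. by rewrite /G2 powRrM. Qed.

Lemma pq0 : 0 < p^-1 * q.
Proof. by rewrite mulr_gt0 ?invr_gt0. Qed.

Lemma G_eq1 (h : R) : 0 <= h -> (h `^ (p^-1 * q) = 1 <-> h = 1).
Proof.
move=> h0; split; last by move=> ->; rewrite powR1.
move/eqP; rewrite powR_eq1 (gt_eqF pq0) orbF => /orP [/eqP //|].
by rewrite ltNge h0.
Qed.

Lemma G_ge1 (h : R) : 1 <= h -> 1 <= h `^ (p^-1 * q).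
Proof.
move=> h1; have e1 : (1 : R) `^ (p^-1 * q) = 1 by rewrite powR1.
rewrite -{1}e1.
by apply: ge0_ler_powR; rewrite ?nnegrE ?(ltW pq0) // (le_trans _ h1).
Qed.
Lemma G_le1 (h : R) : 0 <= h -> h <= 1 -> h `^ (p^-1 * q) <= 1.
Proof.
move=> h0 h1; have e1 : (1 : R) `^ (p^-1 * q) = 1 by rewrite powR1.
rewrite -e1.
by apply: ge0_ler_powR; rewrite ?nnegrE ?(ltW pq0).
Qed.

Lemma sum_eq_card (n : nat) (F : nzpstr n -> R) :
  ((forall z, 1 <= F z) \/ (forall z, F z <= 1)) ->
  (\sum_(z : nzpstr n) F z = #|{: nzpstr n}|%:R <-> forall z, F z = 1).
Proof.
move=> hc; split; last first.
  by move=> h; under eq_bigr do rewrite h; rewrite sumr_const.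
move=> e z.
have e0 : \sum_(z : nzpstr n) (F z - 1) = 0 by rewrite sumrB e sumr_const subrr.
case: hc => hc.
  have hge : forall z, true -> 0 <= F z - 1 by move=> y _; rewrite subr_ge0.
  by have := psumr_eq0P hge e0 (i:=z) isT => /eqP; rewrite subr_eq0 => /eqP.
have e1 : \sum_(z : nzpstr n) (1 - F z) = 0.
  by rewrite sumrB sumr_const e subrr.
have hge : forall z, true -> 0 <= 1 - F z by move=> y _; rewrite subr_ge0.
by have := psumr_eq0P hge e1 (i:=z) isT => /eqP; rewrite subr_eq0 => /eqP <-.
Qed.

Hypotheses (hn1 : (1 <= n1)%N) (hn2 : (1 <= n2)%N).

Lemma N_gt0 n : (1 <= n)%N -> (0 : R) < #|{: nzpstr n}|%:R.
Proof.
move=> hn; rewrite ltr0n lt0n; apply/eqP => h0; have := card_nz n.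
rewrite h0 add0n => e.
have : (4 ^ 1 <= 4 ^ n)%N by rewrite leq_pexp2l.
by rewrite -e.
Qed.

Lemma N1_gt0 : 0 < N1. Proof. exact: N_gt0. Qed.
Lemma N2_gt0 : 0 < N2. Proof. exact: N_gt0. Qed.

Lemma cliff_iff : p != 2 ->
  ((forall z : nzpstr n1, 1 <= G1 (val z)) \/ (forall z : nzpstr n1, G1 (val z) <= 1)) ->
  ((forall z : nzpstr n2, 1 <= G2 (val z)) \/ (forall z : nzpstr n2, G2 (val z) <= 1)) ->
  ((S1 = N1 /\ S2 = N2) <-> clifford U1 /\ clifford U2).
Proof.
move=> p2 c1 c2.
have E1 := sum_eq_card _ (fun z : nzpstr n1 => G1 (val z)) c1.
have E2 := sum_eq_card _ (fun z : nzpstr n2 => G2 (val z)) c2.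
have C1 := clifford_H hU1 p0 p2.
have C2 := clifford_H hU2 p0 p2.
split.
  case=> e1 e2; split.
    apply/C1 => z; apply/(G_eq1 _ (H1_ge0 _)); rewrite -G_H1.
    by move: z; apply/E1.
  apply/C2 => z; apply/(G_eq1 _ (H2_ge0 _)); rewrite -G_H2.
  by move: z; apply/E2.
case=> /C1 h1 /C2 h2; split.
  apply/E1 => z; rewrite G_H1; apply/(G_eq1 _ (H1_ge0 _)); exact: h1.
apply/E2 => z; rewrite G_H2; apply/(G_eq1 _ (H2_ge0 _)); exact: h2.
Qed.

Lemma S1_ge0 : 0 <= S1. Proof. by apply: sumr_ge0 => z _; rewrite /G1 powR_ge0. Qed.
Lemma S2_ge0 : 0 <= S2. Proof. by apply: sumr_ge0 => z _; rewrite /G2 powR_ge0. Qed.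

Lemma part_main :
  (p < 2 -> group_norm p q (hatM (tensor U1 U2)) <= group_norm p q (kron (hatM U1) (hatM U2)) /\
     (group_norm p q (kron (hatM U1) (hatM U2)) = group_norm p q (hatM (tensor U1 U2))
       <-> clifford U1 /\ clifford U2)) /\
  (2 < p -> group_norm p q (kron (hatM U1) (hatM U2)) <= group_norm p q (hatM (tensor U1 U2)) /\
     (group_norm p q (kron (hatM U1) (hatM U2)) = group_norm p q (hatM (tensor U1 U2))
       <-> clifford U1 /\ clifford U2)) /\
  (p = 2 -> group_norm p q (kron (hatM U1) (hatM U2)) = group_norm p q (hatM (tensor U1 U2)) /\
     group_norm p q (hatM (tensor U1 U2)) = 1).
Proof.
rewrite gnK gnT.
have hN1 := N1_gt0; have hN2 := N2_gt0.
have [fBA [fAB [fe fc]]] := final_real _ N1 N2 S1 S2 hN1 hN2.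
have hS1 := S1_ge0; have hS2 := S2_ge0.
set A := (N1 * N2)^-1 * (S1 * S2).
set B := ((N1 + 1) * (N2 + 1) - 1)^-1 * ((1 + S1) * (1 + S2) - 1).
have A0 : 0 <= A by rewrite /A mulr_ge0 // ?invr_ge0 ?mulr_ge0 // ltW.
have B0 : 0 <= B.
  rewrite /B mulr_ge0 // ?invr_ge0; nra.
have qi : 0 < q^-1 by rewrite invr_gt0.
have inj : A `^ q^-1 = B `^ q^-1 -> A = B.
  by move=> e; apply: (powR_injective qi) => //; rewrite nnegrE.
have mono : forall x y, 0 <= x -> 0 <= y -> x <= y -> x `^ q^-1 <= y `^ q^-1.
  by move=> x y x0 y0 xy; apply: ge0_ler_powR; rewrite ?nnegrE // ltW.
have SN1 : forall c : (forall z : nzpstr n1, 1 <= G1 (val z)), N1 <= S1.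
  move=> c; have : \sum_(z : nzpstr n1) (1 : R) <= S1 by apply: ler_sum => z _; exact: c z.
  by rewrite sumr_const.
have SN2 : forall c : (forall z : nzpstr n2, 1 <= G2 (val z)), N2 <= S2.
  move=> c; have : \sum_(z : nzpstr n2) (1 : R) <= S2 by apply: ler_sum => z _; exact: c z.
  by rewrite sumr_const.
have SN1' : forall c : (forall z : nzpstr n1, G1 (val z) <= 1), S1 <= N1.
  move=> c; have : S1 <= \sum_(z : nzpstr n1) (1 : R) by apply: ler_sum => z _; exact: c z.
  by rewrite sumr_const.
have SN2' : forall c : (forall z : nzpstr n2, G2 (val z) <= 1), S2 <= N2.
  move=> c; have : S2 <= \sum_(z : nzpstr n2) (1 : R) by apply: ler_sum => z _; exact: c z.
  by rewrite sumr_const.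
split.
  move=> hp.
  have c1 : forall z : nzpstr n1, 1 <= G1 (val z).
    by move=> z; rewrite G_H1; apply: G_ge1; have [h _] := Hrow_props hU1 p0 (val z); exact: h hp.
  have c2 : forall z : nzpstr n2, 1 <= G2 (val z).
    by move=> z; rewrite G_H2; apply: G_ge1; have [h _] := Hrow_props hU2 p0 (val z); exact: h hp.
  have p2 : p != 2 by rewrite lt_eqF.
  have e1 := SN1 c1; have e2 := SN2 c2.
  split; first by apply: mono => //; apply: fBA.
  rewrite -(cliff_iff p2 (or_introl c1) (or_introl c2)); split.
    by move/inj; apply: fe; left.
  by case=> a b; congr (_ `^ _); exact: fc a b.
split.
  move=> hp.
  have pos1 : forall z : nzpstr n1, 0 < G1 (val z).
    by move=> z; rewrite /G1 !powR_gt0 //; have [_ [_ [_ [h _]]]] := Hrow_props hU1 p0 (val z).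
  have pos2 : forall z : nzpstr n2, 0 < G2 (val z).
    by move=> z; rewrite /G2 !powR_gt0 //; have [_ [_ [_ [h _]]]] := Hrow_props hU2 p0 (val z).
  have c1 : forall z : nzpstr n1, G1 (val z) <= 1.
    move=> z; rewrite G_H1; apply: G_le1; first exact: H1_ge0.
    by have [_ [h _]] := Hrow_props hU1 p0 (val z); exact: h hp.
  have c2 : forall z : nzpstr n2, G2 (val z) <= 1.
    move=> z; rewrite G_H2; apply: G_le1; first exact: H2_ge0.
    by have [_ [h _]] := Hrow_props hU2 p0 (val z); exact: h hp.
  have p2 : p != 2 by rewrite gt_eqF.
  have e1 := SN1' c1; have e2 := SN2' c2.
  have z1 : 0 < S1.
    rewrite /S1 (bigD1 (nzel n1 hn1)) //=.
    have := pos1 (nzel n1 hn1); have : 0 <= \sum_(i | i != nzel n1 hn1) G1 (val i).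
      by apply: sumr_ge0 => i _; rewrite /G1 powR_ge0.
    lra.
  have z2 : 0 < S2.
    rewrite /S2 (bigD1 (nzel n2 hn2)) //=.
    have := pos2 (nzel n2 hn2); have : 0 <= \sum_(i | i != nzel n2 hn2) G2 (val i).
      by apply: sumr_ge0 => i _; rewrite /G2 powR_ge0.
    lra.
  have f1 : 0 < S1 <= N1 by rewrite z1 e1.
  have f2 : 0 < S2 <= N2 by rewrite z2 e2.
  split; first by apply: mono => //; apply: fAB.
  rewrite -(cliff_iff p2 (or_intror c1) (or_intror c2)); split.
    by move/inj; apply: fe; right.
  by case=> a b; congr (_ `^ _); exact: fc a b.
move=> hp.
have c1 : forall z : nzpstr n1, G1 (val z) = 1.
  move=> z; rewrite G_H1; apply/(G_eq1 _ (H1_ge0 _)).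
  by have [_ [_ [h _]]] := Hrow_props hU1 p0 (val z); apply: h; rewrite hp.
have c2 : forall z : nzpstr n2, G2 (val z) = 1.
  move=> z; rewrite G_H2; apply/(G_eq1 _ (H2_ge0 _)).
  by have [_ [_ [h _]]] := Hrow_props hU2 p0 (val z); apply: h; rewrite hp.
have e1 : S1 = N1 by rewrite /S1; under eq_bigr do rewrite c1; rewrite sumr_const.
have e2 : S2 = N2 by rewrite /S2; under eq_bigr do rewrite c2; rewrite sumr_const.
have eAB : A = B by exact: fc e1 e2.
rewrite -eAB; split => //.
rewrite /A e1 e2 mulVf ?powR1 //.
by rewrite mulf_neq0 // lt0r_neq0.
Qed.

Definition h1 z := H1 z `^ p^-1.
Definition h2 z := H2 z `^ p^-1.
Definition m1 := \big[Num.max/0]_(z : nzpstr n1) h1 (val z).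
Definition m2 := \big[Num.max/0]_(z : nzpstr n2) h2 (val z).

Lemma ginfK : group_norm_inf p (kron (hatM U1) (hatM U2)) =
  \big[Num.max/0]_(z : nzpstr n1 * nzpstr n2) (h1 (val z.1) * h2 (val z.2)).
Proof. by apply: eq_bigr => z _; rewrite rowK powRM ?H1_ge0 ?H2_ge0. Qed.

Lemma ginfT : group_norm_inf p (hatM (tensor U1 U2)) =
  \big[Num.max/0]_(z : nzpstr (n1 + n2)) (h1 (lpf n1 n2 (val z)) * h2 (rpf n1 n2 (val z))).
Proof. by apply: eq_bigr => z _; rewrite rowT powRM ?H1_ge0 ?H2_ge0. Qed.

Lemma h1_ge0 z : 0 <= h1 z. Proof. exact: powR_ge0. Qed.
Lemma h2_ge0 z : 0 <= h2 z. Proof. exact: powR_ge0. Qed.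

Lemma m1_att : exists z1 : nzpstr n1, m1 = h1 (val z1).
Proof.
have [z _ e] := @eq_bigmax _ _ _ 0 (nzel n1 hn1) xpredT (fun z => h1 (val z)) isT
  (fun i _ => h1_ge0 _).
by exists z.
Qed.
Lemma m2_att : exists z2 : nzpstr n2, m2 = h2 (val z2).
Proof.
have [z _ e] := @eq_bigmax _ _ _ 0 (nzel n2 hn2) xpredT (fun z => h2 (val z)) isT
  (fun i _ => h2_ge0 _).
by exists z.
Qed.

Lemma m1_ge0 : 0 <= m1. Proof. by have [z ->] := m1_att; exact: h1_ge0. Qed.
Lemma m2_ge0 : 0 <= m2. Proof. by have [z ->] := m2_att; exact: h2_ge0. Qed.

Lemma K_eq : group_norm_inf p (kron (hatM U1) (hatM U2)) = m1 * m2.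
Proof.
rewrite ginfK; apply/eqP; rewrite eq_le; apply/andP; split.
  apply: bigmax_le; first by rewrite mulr_ge0 ?m1_ge0 ?m2_ge0.
  move=> [a b] _ /=; apply: ler_pM; rewrite ?h1_ge0 ?h2_ge0 //.
    exact: (le_bigmax 0 (fun z : nzpstr n1 => h1 (val z)) a).
  exact: (le_bigmax 0 (fun z : nzpstr n2 => h2 (val z)) b).
have [z1 ->] := m1_att; have [z2 ->] := m2_att.
exact: (le_bigmax 0 (fun z : nzpstr n1 * nzpstr n2 => h1 (val z.1) * h2 (val z.2)) (z1, z2)).
Qed.

Lemma mT_ge : m1 * m2 <= group_norm_inf p (hatM (tensor U1 U2)).
Proof.
rewrite ginfT; have [z1 ->] := m1_att; have [z2 ->] := m2_att.
have nz : joinf n1 n2 (val z1) (val z2) != pstr0 (n1 + n2).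
  apply/eqP => e; move: (valP z1); rewrite -(lpf_join n1 n2 _ (val z1) (val z2)) e lpf0.
  by rewrite eqxx.
have := le_bigmax 0 (fun z : nzpstr (n1 + n2) => h1 (lpf n1 n2 (val z)) * h2 (rpf n1 n2 (val z)))
  (exist (fun z : pstr (n1 + n2) => z != pstr0 (n1 + n2)) _ nz).
by rewrite /= lpf_join rpf_join.
Qed.

Lemma T_le : (forall z, 1 <= H1 z) -> (forall z, 1 <= H2 z) ->
  group_norm_inf p (hatM (tensor U1 U2)) <= m1 * m2.
Proof.
move=> c1 c2.
have pi : 0 <= p^-1 by rewrite invr_ge0 ltW.
have g1 : forall z, 1 <= h1 z.
  move=> z; rewrite /h1; have e1 : (1 : R) `^ p^-1 = 1 by rewrite powR1.
  by rewrite -{1}e1; apply: ge0_ler_powR; rewrite ?nnegrE // (le_trans _ (c1 z)).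
have g2 : forall z, 1 <= h2 z.
  move=> z; rewrite /h2; have e1 : (1 : R) `^ p^-1 = 1 by rewrite powR1.
  by rewrite -{1}e1; apply: ge0_ler_powR; rewrite ?nnegrE // (le_trans _ (c2 z)).
have l1 : forall z, h1 z <= m1.
  move=> z; have [->|nz] := eqVneq z (pstr0 n1).
    rewrite /h1 (Hrow0 hU1 p0) powR1; have [w ->] := m1_att; exact: g1.
  exact: (le_bigmax 0 (fun z : nzpstr n1 => h1 (val z)) (exist (fun z : pstr n1 => z != pstr0 n1) z nz)).
have l2 : forall z, h2 z <= m2.
  move=> z; have [->|nz] := eqVneq z (pstr0 n2).
    rewrite /h2 (Hrow0 hU2 p0) powR1; have [w ->] := m2_att; exact: g2.
  exact: (le_bigmax 0 (fun z : nzpstr n2 => h2 (val z)) (exist (fun z : pstr n2 => z != pstr0 n2) z nz)).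
rewrite ginfT; apply: bigmax_le; first by rewrite mulr_ge0 ?m1_ge0 ?m2_ge0.
by move=> z _; apply: ler_pM; rewrite ?h1_ge0 ?h2_ge0.
Qed.

Lemma part_inf :
  (p < 2 -> group_norm_inf p (kron (hatM U1) (hatM U2)) = group_norm_inf p (hatM (tensor U1 U2))) /\
  (2 < p -> group_norm_inf p (kron (hatM U1) (hatM U2)) <= group_norm_inf p (hatM (tensor U1 U2))) /\
  (p = 2 -> group_norm_inf p (kron (hatM U1) (hatM U2)) = group_norm_inf p (hatM (tensor U1 U2)) /\
      group_norm_inf p (hatM (tensor U1 U2)) = 1).
Proof.
split.
  move=> hp; rewrite K_eq; apply/eqP; rewrite eq_le mT_ge andTb.
  apply: T_le => z.
    by have [h _] := Hrow_props hU1 p0 z; exact: h hp.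
  by have [h _] := Hrow_props hU2 p0 z; exact: h hp.
split; first by move=> _; rewrite K_eq mT_ge.
move=> hp.
have c1 : forall z, H1 z = 1 by move=> z; have [_ [_ [h _]]] := Hrow_props hU1 p0 z; apply: h; rewrite hp.
have c2 : forall z, H2 z = 1 by move=> z; have [_ [_ [h _]]] := Hrow_props hU2 p0 z; apply: h; rewrite hp.
have M1 : m1 = 1 by have [z ->] := m1_att; rewrite /h1 c1 powR1.
have M2 : m2 = 1 by have [z ->] := m2_att; rewrite /h2 c2 powR1.
have eT : group_norm_inf p (hatM (tensor U1 U2)) = m1 * m2.
  apply/eqP; rewrite eq_le mT_ge andbT; apply: T_le => z; by rewrite ?c1 ?c2.
by rewrite K_eq eT M1 M2 mulr1.
Qed.

End Two.

Theorem mainTheorem16 (R : realType) (n1 n2 : nat) (U1 : op R n1) (U2 : op R n2) :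
  (1 <= n1)%N -> (1 <= n2)%N -> unitary U1 -> unitary U2 ->
  let K := kron (hatM U1) (hatM U2) in
  let T := hatM (tensor U1 U2) in
  (* (1) *)
  (forall p q : R, 0 < p -> p < 2 -> 0 < q ->
     group_norm p q T <= group_norm p q K /\
     (group_norm p q K = group_norm p q T <-> clifford U1 /\ clifford U2)) /\
  (* (2) *)
  (forall p : R, 0 < p -> p < 2 -> group_norm_inf p K = group_norm_inf p T) /\
  (* (3) *)
  (forall p : R, 2 < p ->
     (forall q : R, 0 < q ->
        group_norm p q K <= group_norm p q T /\
        (group_norm p q K = group_norm p q T <-> clifford U1 /\ clifford U2)) /\
     group_norm_inf p K <= group_norm_inf p T) /\
  (* (4) *)
  ((forall q : R, 0 < q -> group_norm 2 q K = group_norm 2 q T /\ group_norm 2 q T = 1) /\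
   group_norm_inf 2 K = group_norm_inf 2 T /\ group_norm_inf 2 T = 1).
Proof.
move=> hn1 hn2 hU1 hU2 K T.
have two0 : (0 : R) < 2 by [].
split.
  move=> p q p0 hp q0.
  have [h _] := part_main _ _ _ _ _ hU1 hU2 _ p0 _ q0 hn1 hn2; exact: h hp.
split.
  move=> p p0 hp.
  have [h _] := part_inf _ _ _ _ _ hU1 hU2 _ p0 hn1 hn2; exact: h hp.
split.
  move=> p hp; have p0 : 0 < p by apply: lt_trans hp.
  split.
    move=> q q0; have [_ [h _]] := part_main _ _ _ _ _ hU1 hU2 _ p0 _ q0 hn1 hn2; exact: h hp.
  by have [_ [h _]] := part_inf _ _ _ _ _ hU1 hU2 _ p0 hn1 hn2; exact: h hp.
split.
  move=> q q0; have [_ [_ h]] := part_main _ _ _ _ _ hU1 hU2 _ two0 _ q0 hn1 hn2; exact: h.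
by have [_ [_ h]] := part_inf _ _ _ _ _ hU1 hU2 _ two0 hn1 hn2; exact: h.
Qed.
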